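(* Let the sequence $r$ on positive integers be defined by $r(1)=0$, $r(k)=\frac{3k}{2}+r(\frac{k}{2})$ if $k$ is even, and $r(k)=2+\frac{3(k-1)}{2}+r(\frac{k+1}{2})$ if $k\neq1$ is odd. Then $r$ is strictly increasing. *)

(* Defs.v *)
From mathcomp Require Import all_boot.
Set Implicit Arguments. Unset Strict Implicit. Unset Printing Implicit Defensive.

(* The recurrence of the paper, for a sequence r : nat -> nat on positive
   integers (values at 0 are irrelevant).  All values are natural numbers:
   3k/2 with k even, and 3(k-1)/2 with k odd, are integers. *)
Definition r_rec (r : nat -> nat) : Prop :=
  [/\ r 1 = 0,
      (forall k, 0 < k -> ~~ odd k -> r k = (3 * k) %/ 2 + r (k %/ 2))
    & (forall k, 1 < k -> odd k ->
         r k = 2 + (3 * (k - 1)) %/ 2 + r ((k + 1) %/ 2))].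

(* Main.v *)
Require Import Defs.
From mathcomp Require Import all_boot.
From mathcomp Require Import zify.

Lemma step (r : nat -> nat) : r_rec r -> forall k, 0 < k -> r k < r k.+1.
Proof.
case=> r1 he ho.
elim/ltn_ind => k IH kp.
have [/eqP k1|k1] := boolP (k == 1).
  subst k; rewrite r1 (he 2) //.
have kg : 1 < k by lia.
case/boolP: (odd k) => ok.
- have [j kj] : exists j, k = j.*2.+1.
    exists k./2; by rewrite -[k in k = _]odd_double_half ok add1n.
  subst k.
  rewrite (ho _ kg ok) (he j.*2.+2) //=; last by rewrite odd_double.
  have -> : (j.*2.+1 + 1) %/ 2 = j.+1 by rewrite addn1 -doubleS -muln2 mulnK.
  have -> : j.*2.+2 %/ 2 = j.+1 by rewrite -doubleS -muln2 mulnK.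
  have -> : (3 * (j.*2.+1 - 1)) %/ 2 = 3 * j by rewrite subn1 /= -muln2 mulnA mulnK.
  have -> : (3 * j.*2.+2) %/ 2 = 3 * j.+1 by rewrite -doubleS -muln2 mulnA mulnK.
  lia.
- have [j kj] : exists j, k = j.*2.
    exists k./2; by rewrite -[k in k = _]odd_double_half (negbTE ok) add0n.
  subst k.
  have jp : 0 < j by lia.
  have o2 : odd j.*2.+1 by rewrite /= odd_double.
  have g1 : 1 < j.*2.+1 by rewrite ltnS double_gt0.
  rewrite (he _ kp ok) (ho j.*2.+1) //.
  have -> : (j.*2.+1 + 1) %/ 2 = j.+1 by rewrite addn1 -doubleS -muln2 mulnK.
  have -> : j.*2 %/ 2 = j by rewrite -muln2 mulnK.
  have -> : (3 * (j.*2.+1 - 1)) %/ 2 = 3 * j by rewrite subn1 /= -muln2 mulnA mulnK.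
  have -> : (3 * j.*2) %/ 2 = 3 * j by rewrite -muln2 mulnA mulnK.
  have := IH j (ltac:(lia)) jp. lia.
Qed.

Theorem lemma5 (r : nat -> nat) :
  r_rec r -> forall m n : nat, 0 < m -> m < n -> r m < r n.
Proof.
move=> H m n mp; elim: n => // n IHn.
rewrite ltnS leq_eqVlt => /orP[/eqP<-|lt]; first by move: (step r H m mp).
apply: ltn_trans (IHn lt) (step r H n (ltn_trans mp lt)).
Qed.
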